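(* Let $p,d\ge 1$ be integers, let $C_0,\dots,C_{p-1}\in\mathbb{R}^{d\times d}$, and let $M\in\mathbb{R}^{pd\times pd}$ be the block companion matrix whose block rows $i=1,\dots,p-1$ have $I_d$ in block column $i+1$ and zeros elsewhere, and whose last block row is $(C_0,C_1,\dots,C_{p-1})$. Suppose there is an invertible $Q\in\mathbb{R}^{d\times d}$ such that $T_i:=Q^{-1}C_iQ$ is upper triangular for each $i$. Then the set of eigenvalues of $M$ equals $$\bigcup_{j=1}^d\left\{\lambda\in\mathbb{C}:\ \lambda^p-\sum_{k=0}^{p-1}\lambda^k (T_k)_{j,j}=0\right\}.$$
   Context: The diagonal entries $(T_k)_{1,1},\dots,(T_k)_{d,d}$ are the eigenvalues of $C_k$ listed in the order induced by $Q$. *)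

(* Defs.v *)
From HB Require Import structures.
From mathcomp Require Import all_boot all_order all_algebra.
From mathcomp Require Import complex.
From mathcomp Require Import reals.
Set Implicit Arguments. Unset Strict Implicit. Unset Printing Implicit Defensive.
Import Order.TTheory GRing.Theory Num.Theory.
Local Open Scope ring_scope.

Lemma blk_proof (p d : nat) (a : 'I_(p * d)) : (a %/ d < p)%N.
Proof.
case: d a => [|d] a; first by case: a => a; rewrite muln0.
by rewrite ltn_divLR // ltn_ord.
Qed.

Lemma off_proof (p d : nat) (a : 'I_(p * d)) : (a %% d < d)%N.
Proof.
case: d a => [|d] a; first by case: a => a; rewrite muln0.
by rewrite ltn_pmod.
Qed.

Definition blk (p d : nat) (a : 'I_(p * d)) : 'I_p := Ordinal (blk_proof a).
Definition off (p d : nat) (a : 'I_(p * d)) : 'I_d := Ordinal (off_proof a).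

(* Block companion matrix (0-based blocks): block row i < p-1 has I_d in
   block column i+1 and zeros elsewhere; the last block row is
   (C_0, C_1, ..., C_{p-1}). *)
Definition block_companion (R : pzRingType) (p d : nat) (C : 'I_p -> 'M[R]_d)
  : 'M[R]_(p * d) :=
  \matrix_(a, b)
    if ((blk a).+1 < p)%N then
      ((nat_of_ord (blk b) == (blk a).+1) && (off a == off b))%:R
    else C (blk b) (off a) (off b).

Definition upper_triangular (R : pzRingType) (d : nat) (T : 'M[R]_d) : Prop :=
  forall i j : 'I_d, (j < i)%N -> T i j = 0.

(* Main.v *)
Require Import Defs.
From HB Require Import structures.
From mathcomp Require Import all_boot all_order all_algebra.
From mathcomp Require Import complex.
From mathcomp Require Import reals.
From mathcomp Require Import zify.
Import Order.TTheory GRing.Theory Num.Theory.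
Local Open Scope ring_scope.
Set Implicit Arguments. Unset Strict Implicit.
Section Gen.
Variable K : fieldType.

Lemma ker_col n (B : 'M[K]_n) :
  (exists x : 'cV_n, x != 0 /\ B *m x = 0) <-> B \notin unitmx.
Proof.
split.
  move=> [x [xn0 Bx]]; apply/negP=> uB; move/negP: xn0; apply.
  by rewrite -(mulKmx uB x) Bx mulmx0.
move=> nu.
have : kermx B^T != 0 by rewrite kermx_eq0 row_free_unit unitmx_tr.
move=> hk.
have [i hi] : exists i, row i (kermx B^T) != 0.
  apply/existsP; move: hk; apply: contraNT => /existsPn hall.
  by apply/eqP/row_matrixP=> i; rewrite row0; apply/eqP/negPn/hall.
exists (row i (kermx B^T))^T; split; first by rewrite trmx_eq0.
rewrite -[B]trmxK -trmx_mul -row_mul trmxK mulmx_ker row0 trmx0 //=.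
Qed.

Lemma eig_col n (g : 'M[K]_n) a :
  eigenvalue g a <-> exists x : 'cV_n, x != 0 /\ g *m x = a *: x.
Proof.
rewrite /eigenvalue /eigenspace kermx_eq0 row_free_unit -ker_col.
split=> -[x [xn hx]]; exists x; split=> //.
  by apply/eqP; rewrite -subr_eq0 -mul_scalar_mx -mulmxBl hx.
by rewrite mulmxBl hx mul_scalar_mx subrr.
Qed.
End Gen.
Section Idx.
Variables p d : nat.

Lemma idx_proof (k : 'I_p) (j : 'I_d) : (k * d + j < p * d)%N.
Proof.
have := ltn_ord k; have := ltn_ord j => hj hk.
apply: (@leq_trans (k * d + d)); first by rewrite ltn_add2l.
by rewrite -mulSnr leq_mul2r hk orbT.
Qed.

Definition idx (k : 'I_p) (j : 'I_d) : 'I_(p * d) := Ordinal (idx_proof k j).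

Lemma blk_idx k j : blk (idx k j) = k.
Proof.
apply: val_inj => /=; have hd : (0 < d)%N by case: d j => // -[].
by rewrite divnMDl // divn_small ?addn0.
Qed.

Lemma off_idx k j : off (idx k j) = j.
Proof. by apply: val_inj => /=; rewrite modnMDl modn_small. Qed.

Lemma idx_blk a : idx (blk a) (off a) = a.
Proof. by apply: val_inj => /=; rewrite -divn_eq. Qed.

Lemma sum_idx (V : nmodType) (F : 'I_(p * d) -> V) :
  \sum_a F a = \sum_(k < p) \sum_(j < d) F (idx k j).
Proof.
rewrite pair_big /= (reindex (fun u : 'I_p * 'I_d => idx u.1 u.2)) //.
exists (fun a => (blk a, off a)) => [[k j] _ | a _] /=.
  by rewrite blk_idx off_idx.
exact: idx_blk.
Qed.
End Idx.
Section Comp.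
Variables (K : fieldType) (p d : nat) (hp : (0 < p)%N) (Cc : 'I_p -> 'M[K]_d).
Let Mc := block_companion Cc.

Lemma Mc_mul_lo (x : 'cV_(p * d)) a (h : ((blk a).+1 < p)%N) :
  (Mc *m x) a 0 = x (idx (Ordinal h) (off a)) 0.
rewrite mxE sum_idx (bigD1 (Ordinal h)) //= [X in _ + X]big1 ?addr0.
  rewrite (bigD1 (off a)) //= [X in _ + X]big1 ?addr0.
    by rewrite mxE blk_idx off_idx h /= !eqxx mul1r.
  move=> j hj; rewrite mxE blk_idx off_idx h /=.
  by rewrite eq_sym (negPf hj) andbF mul0r.
move=> k hk; apply: big1 => j _; rewrite mxE blk_idx off_idx h.
suff -> : (nat_of_ord k == (blk a).+1) = false by rewrite mul0r.
by apply/negP=> /eqP e; move/negP: hk; apply; apply/eqP/val_inj.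
Qed.

Lemma Mc_mul_hi (x : 'cV_(p * d)) a (h : ~~ ((blk a).+1 < p)%N) :
  (Mc *m x) a 0 = \sum_(k < p) \sum_(j < d) Cc k (off a) j * x (idx k j) 0.
Proof.
rewrite mxE sum_idx; apply: eq_bigr => k _; apply: eq_bigr => j _.
by rewrite mxE blk_idx off_idx (negPf h).
Qed.

Variable lam : K.
Let N := (lam ^+ p)%:M - \sum_(k < p) lam ^+ k *: Cc k.

Lemma N_mul (x0 : 'cV_d) i :
  (N *m x0) i 0 = lam ^+ p * x0 i 0 - \sum_(k < p) lam ^+ k * \sum_(j < d) Cc k i j * x0 j 0.
Proof.
rewrite /N mulmxBl mul_scalar_mx mulmx_suml !mxE summxE; congr (_ - _).
by apply: eq_bigr => k _; rewrite -scalemxAl !mxE.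
Qed.

Lemma comp_eig :
  (exists x : 'cV_(p * d), x != 0 /\ Mc *m x = lam *: x) <->
  exists x0 : 'cV_d, x0 != 0 /\ N *m x0 = 0.
Proof.
pose k0 : 'I_p := Ordinal hp.
have hl : (p.-1 < p)%N by rewrite prednK.
pose kl : 'I_p := Ordinal hl.
split.
  move=> [x [xn0 hx]].
  pose x0 : 'cV_d := \col_j x (idx k0 j) 0.
  have claim : forall (k : 'I_p) j, x (idx k j) 0 = lam ^+ k * x0 j 0.
    move=> [k hk] j; elim: k hk => [|k IH] hk.
      by rewrite expr0 mul1r mxE; congr (x (idx _ _) 0); apply: val_inj.
    have hk' : (k < p)%N by apply: ltnW.
    have hb : ((blk (idx (Ordinal hk') j)).+1 < p)%N by rewrite blk_idx.
    have := Mc_mul_lo x hb; rewrite hx mxE IH.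
    have -> : Ordinal hb = Ordinal hk.
      by apply: val_inj; change ((nat_of_ord (blk (idx (Ordinal hk') j))).+1 = k.+1); rewrite blk_idx.
    by rewrite off_idx => <-; rewrite exprS mulrA.
  exists x0; split.
    apply: contraNneq xn0 => e; apply/eqP/matrixP => a b.
    by rewrite ord1 -(idx_blk a) claim e !mxE mulr0.
  apply/matrixP => i b; rewrite ord1 N_mul [RHS]mxE.
  have hb : ~~ ((blk (idx kl i)).+1 < p)%N by rewrite blk_idx /= prednK // ltnn.
  have := Mc_mul_hi x hb; rewrite hx mxE (claim kl i) off_idx /= mulrA -exprS prednK //.
  move=> ->; apply/eqP; rewrite subr_eq0; apply/eqP; apply: eq_bigr => k _.
  by rewrite mulr_sumr; apply: eq_bigr => j _; rewrite claim mulrCA.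
move=> [x0 [x0n hN]].
pose x : 'cV_(p * d) := \col_a (lam ^+ (blk a) * x0 (off a) 0).
exists x; split.
  have [j hj] : exists j, x0 j 0 != 0.
    apply/existsP; move: x0n; apply: contraNT => /existsPn hall.
    by apply/eqP/matrixP => j b; rewrite ord1 mxE; apply/eqP/negPn/hall.
  apply: contraNneq hj => e.
  have := congr1 (fun M : 'cV_(p * d) => M (idx k0 j) 0) e.
  by rewrite /x !mxE blk_idx off_idx expr0 mul1r => ->.
apply/matrixP => a b; rewrite ord1.
case h: ((blk a).+1 < p)%N.
  by rewrite Mc_mul_lo !mxE blk_idx off_idx /= exprS mulrA.
rewrite Mc_mul_hi ?h // [in RHS]mxE [in RHS]mxE.
have eb : nat_of_ord (blk a) = p.-1.
  have := ltn_ord (blk a); move/negbT: h; rewrite -leqNgt => h1 h2; lia.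
rewrite eb mulrA -exprS prednK //.
move/matrixP: hN => /(_ (off a) 0); rewrite N_mul mxE => /eqP; rewrite subr_eq0 => /eqP ->.
apply: eq_bigr => k _; rewrite mulr_sumr; apply: eq_bigr => j _.
by rewrite mxE blk_idx off_idx mulrCA.
Qed.
End Comp.
Section Det.
Variables (K : fieldType) (p d : nat) (Cc : 'I_p -> 'M[K]_d) (Qc : 'M[K]_d).
Hypothesis hQ : Qc \in unitmx.
Hypothesis hT : forall k, upper_triangular (invmx Qc *m Cc k *m Qc).
Variable lam : K.
Let N := (lam ^+ p)%:M - \sum_(k < p) lam ^+ k *: Cc k.

Lemma conjN : invmx Qc *m N *m Qc =
  (lam ^+ p)%:M - \sum_(k < p) lam ^+ k *: (invmx Qc *m Cc k *m Qc).
Proof.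
rewrite /N mulmxBr mulmxBl mul_mx_scalar -scalemxAl mulVmx // scalemx1.
congr (_ - _); rewrite mulmx_sumr mulmx_suml; apply: eq_bigr => k _.
by rewrite -scalemxAr -scalemxAl.
Qed.

Lemma det_part :
  (exists x0 : 'cV_d, x0 != 0 /\ N *m x0 = 0) <->
  exists j : 'I_d, lam ^+ p - \sum_(k < p) lam ^+ k * (invmx Qc *m Cc k *m Qc) j j = 0.
Proof.
apply: (iff_trans (@ker_col K d N)).
rewrite unitmxE unitfE negbK.
have -> : \det N = \det (invmx Qc *m N *m Qc).
  rewrite !det_mulmx det_inv mulrAC mulVf ?mul1r //.
  by rewrite -unitfE -unitmxE.
rewrite conjN -det_tr det_trig.
  split => [/prodf_eq0 [j _ /eqP e] | [j e]].
    exists j; move: e; rewrite !mxE summxE.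
    by under eq_bigr do rewrite mxE; rewrite eqxx mulr1n.
  apply/prodf_eq0; exists j => //; rewrite !mxE summxE.
  under eq_bigr do rewrite mxE.
  by rewrite eqxx mulr1n e.
apply/is_trig_mxP => i j hij; rewrite !mxE summxE.
rewrite big1 ?subr0.
  rewrite eq_sym (_ : (i == j) = false) ?mulr0n //; apply/negbTE; rewrite neq_ltn hij //.
by move=> k _; rewrite mxE hT // mulr0.
Qed.
End Det.

Local Open Scope complex_scope.

Theorem corollary2p7 (R : realType) (p d : nat) (hp : (0 < p)%N) (hd : (0 < d)%N)
  (C : 'I_p -> 'M[R]_d) (Q : 'M[R]_d) (hQ : Q \in unitmx)
  (hT : forall k : 'I_p, upper_triangular (invmx Q *m C k *m Q)) :
  forall lambda : R[i],
    eigenvalue (map_mx (real_complex R) (block_companion C)) lambda <->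
    exists j : 'I_d,
      lambda ^+ p
      - \sum_(k < p) lambda ^+ k * ((invmx Q *m C k *m Q) j j)%:C = 0.
Proof.
move=> lam.
pose Cc k := map_mx (real_complex R) (C k).
pose Qc := map_mx (real_complex R) Q.
have hM : map_mx (real_complex R) (block_companion C) = block_companion Cc.
  apply/matrixP => a b; rewrite !mxE; case: ifP => _.
    by rewrite rmorph_nat.
  by [].
have hQc : Qc \in unitmx by rewrite map_unitmx.
have hTe : forall k, invmx Qc *m Cc k *m Qc =
    map_mx (real_complex R) (invmx Q *m C k *m Q).
  by move=> k; rewrite !map_mxM map_invmx.
have hTc : forall k, upper_triangular (invmx Qc *m Cc k *m Qc).
  by move=> k i j hij; rewrite hTe mxE hT.
rewrite hM; apply: (iff_trans (eig_col _ _)).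
apply: (iff_trans (comp_eig hp Cc lam)).
apply: (iff_trans (det_part hQc hTc lam)).
have hs : forall j, \sum_(k < p) lam ^+ k * (invmx Qc *m Cc k *m Qc) j j =
    \sum_(k < p) lam ^+ k * ((invmx Q *m C k *m Q) j j)%:C.
  by move=> j; apply: eq_bigr => k _; rewrite hTe mxE.
by split=> -[j e]; exists j; [rewrite -hs | rewrite hs].
Qed.
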